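(* Given a growth control function $g$, a strictly increasing sequence of integers $(p_j)_{j\in\mathbb{N}_0}$ with $p_0=0$ and $\sup_{j\in\mathbb{N}}p_{j+1}/p_j=+\infty$, and $\beta\ge0$, there exists a weight sequence $\boldsymbol{M}^\beta=(M^\beta_p)_p$ with quotients $m^\beta_p=M^\beta_{p+1}/M^\beta_p$ such that: (i) $m^\beta_p\le g(p)(1+p)^\beta$ for all $p\in\mathbb{N}_0$; (ii) $m^\beta_{p_j}=g(p_j)(1+p_j)^\beta$ for all $j\in\mathbb{N}_0$; (iii) $\gamma(\boldsymbol{M}^\beta)=\beta$.
   Context: A growth control function is a strictly increasing function $g\colon[0,\infty)\to[1,\infty)$ with $g(0)=1$ and $\lim_{t\to\infty}g(t)=\infty$. A weight sequence is a sequence $\boldsymbol{M}=(M_p)_{p\in\mathbb{N}_0}$ of positive reals with $M_0=1$, $M_p^2\le M_{p-1}M_{p+1}$ ($p\ge1$) and $m_p=M_{p+1}/M_p\to\infty$. A sequence $(c_p)$ is almost increasing if $c_p\le ac_q$ for all $q\ge p$, some $a>0$; $\gamma(\boldsymbol{M})=\sup\{\mu>0:(m_p/(p+1)^\mu)_p\text{ almost increasing}\}\in[0,\infty]$ (value $0$ for the empty set). *)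

(* Defs.v *)
From Stdlib Require Import Reals.
Open Scope R_scope.

(* Growth control function g : [0,oo) -> [1,oo), strictly increasing,
   g(0) = 1, g(t) -> +oo.  Only its values on [0,oo) matter. *)
Definition growth_control (g : R -> R) : Prop :=
  (forall t, 0 <= t -> 1 <= g t) /\
  (forall s t, 0 <= s -> s < t -> g s < g t) /\
  g 0 = 1 /\
  (forall A, exists T, 0 <= T /\ forall t, T <= t -> A < g t).

Definition quot (M : nat -> R) (p : nat) : R := M (S p) / M p.

Definition weight_sequence (M : nat -> R) : Prop :=
  (forall p, 0 < M p) /\
  M 0%nat = 1 /\
  (forall p, (1 <= p)%nat -> M p ^ 2 <= M (p - 1)%nat * M (S p)) /\
  (forall A, exists N, forall p, (N <= p)%nat -> A < quot M p).

Definition almost_increasing (c : nat -> R) : Prop :=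
  exists a, 0 < a /\ forall p q, (p <= q)%nat -> c p <= a * c q.

(* The set whose supremum is gamma(M) *)
Definition gamma_set (M : nat -> R) (mu : R) : Prop :=
  0 < mu /\ almost_increasing (fun p => quot M p / Rpower (INR p + 1) mu).

(* gamma(M) = b  (for a finite real b), with sup of the empty set being 0:
   b is the least upper bound of gamma_set M among nonnegative reals. *)
Definition gamma_eq (M : nat -> R) (b : R) : Prop :=
  0 <= b /\
  (forall mu, gamma_set M mu -> mu <= b) /\
  (forall c, 0 <= c -> (forall mu, gamma_set M mu -> mu <= c) -> b <= c).

(* Main.v *)
Require Import Defs.
From Stdlib Require Import Reals Lra Lia.
Open Scope R_scope.

Fixpoint blk (pj : nat -> nat) (p : nat) : nat :=
  match p with
  | O => O
  | S p' => if Nat.leb (pj (S (blk pj p'))) (S p') then S (blk pj p') else blk pj p'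
  end.

Lemma pj_mono (pj : nat -> nat) (H : forall j, (pj j < pj (S j))%nat) :
  forall a b, (a <= b)%nat -> (pj a <= pj b)%nat.
Proof. intros a b Hab; induction Hab; [lia | specialize (H m); lia]. Qed.

Lemma blk_inv (pj : nat -> nat) (H0 : pj 0%nat = 0%nat) (H : forall j, (pj j < pj (S j))%nat) :
  forall p, (pj (blk pj p) <= p /\ p < pj (S (blk pj p)))%nat.
Proof.
  induction p as [|p IH].
  - simpl. rewrite H0. specialize (H 0%nat). lia.
  - cbn [blk]. destruct (Nat.leb_spec (pj (S (blk pj p))) (S p)).
    + specialize (H (S (blk pj p))). lia.
    + lia.
Qed.

Lemma blk_unique (pj : nat -> nat) (H0 : pj 0%nat = 0%nat) (H : forall j, (pj j < pj (S j))%nat) :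
  forall p b, (pj b <= p)%nat -> (p < pj (S b))%nat -> blk pj p = b.
Proof.
  intros p b Hb1 Hb2. destruct (blk_inv pj H0 H p) as [I1 I2].
  destruct (Nat.lt_trichotomy (blk pj p) b) as [Hl|[He|Hl]]; auto.
  - pose proof (pj_mono pj H (S (blk pj p)) b Hl). lia.
  - pose proof (pj_mono pj H (S b) (blk pj p) Hl). lia.
Qed.

Lemma blk_mono (pj : nat -> nat) : forall p p', (p <= p')%nat -> (blk pj p <= blk pj p')%nat.
Proof.
  intros p p' Hp; induction Hp; [lia|].
  cbn [blk]. destruct (Nat.leb (pj (S (blk pj m))) (S m)); lia.
Qed.

Lemma blk_ge (pj : nat -> nat) (H0 : pj 0%nat = 0%nat) (H : forall j, (pj j < pj (S j))%nat) :
  forall j p, (pj j <= p)%nat -> (j <= blk pj p)%nat.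
Proof.
  intros j p Hj. destruct (blk_inv pj H0 H p) as [I1 I2].
  destruct (Nat.le_gt_cases j (blk pj p)); auto.
  pose proof (pj_mono pj H (S (blk pj p)) j H1). lia.
Qed.

Lemma pj_ge (pj : nat -> nat) (H : forall j, (pj j < pj (S j))%nat) : forall j, (j <= pj j)%nat.
Proof. induction j; [lia| specialize (H j); lia]. Qed.

Fixpoint Mseq (m : nat -> R) (p : nat) : R :=
  match p with O => 1 | S p' => Mseq m p' * m p' end.

Lemma Mseq_pos (m : nat -> R) (Hm : forall p, 0 < m p) : forall p, 0 < Mseq m p.
Proof. induction p; simpl; [lra|]. specialize (Hm p). nra. Qed.

Lemma g_mono (g : R -> R) (Hg : forall s t, 0 <= s -> s < t -> g s < g t) :
  forall s t, 0 <= s -> s <= t -> g s <= g t.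
Proof.
  intros s t Hs Hst. destruct (Rle_lt_or_eq_dec _ _ Hst) as [Hl|He].
  - left; apply Hg; auto.
  - subst; lra.
Qed.

Lemma Rpower_ge1 (x b : R) : 1 <= x -> 0 <= b -> 1 <= Rpower x b.
Proof. intros. rewrite <- (Rpower_O x) by lra. apply Rle_Rpower; lra. Qed.

Theorem theorem4p10 (g : R -> R) (pj : nat -> nat) (beta : R) :
  growth_control g ->
  pj 0%nat = 0%nat ->
  (forall j, (pj j < pj (S j))%nat) ->
  (forall C, exists j, (1 <= j)%nat /\ C < INR (pj (S j)) / INR (pj j)) ->
  0 <= beta ->
  exists M : nat -> R,
    weight_sequence M /\
    (forall p, quot M p <= g (INR p) * Rpower (1 + INR p) beta) /\
    (forall j, quot M (pj j) = g (INR (pj j)) * Rpower (1 + INR (pj j)) beta) /\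
    gamma_eq M beta.
Proof.
  intros [Hg1 [Hgs [Hg0 Hginf]]] H0 Hs Hsup Hb.
  pose (q := fun p => pj (blk pj p)).
  pose (m := fun p => g (INR (q p)) * Rpower (1 + INR p) beta).
  assert (Hq : forall p, (q p <= p)%nat) by (intro p; apply (blk_inv pj H0 Hs p)).
  assert (Hqm : forall p p', (p <= p')%nat -> (q p <= q p')%nat).
  { intros. apply (pj_mono pj Hs); auto. apply blk_mono; auto. }
  assert (HG1 : forall p, 1 <= g (INR (q p))) by (intro; apply Hg1, pos_INR).
  assert (HR1 : forall p, 1 <= Rpower (1 + INR p) beta).
  { intro p; apply Rpower_ge1; auto. pose proof (pos_INR p); lra. }
  assert (Hm1 : forall p, 1 <= m p).
  { intro p; unfold m. specialize (HG1 p); specialize (HR1 p). nra. }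
  assert (Hmpos : forall p, 0 < m p) by (intro p; specialize (Hm1 p); lra).
  assert (HMpos := Mseq_pos m Hmpos).
  assert (Hquot : forall p, quot (Mseq m) p = m p).
  { intro p; unfold quot; simpl. specialize (HMpos p). field; lra. }
  assert (Hmmono : forall p, m p <= m (S p)).
  { intro p; unfold m.
    assert (g (INR (q p)) <= g (INR (q (S p)))).
    { apply g_mono; auto. apply pos_INR. apply le_INR, Hqm; lia. }
    assert (Rpower (1 + INR p) beta <= Rpower (1 + INR (S p)) beta).
    { apply Rle_Rpower_l; auto. rewrite S_INR. pose proof (pos_INR p); lra. }
    specialize (HG1 p). specialize (HR1 p). nra. }
  assert (HqP : forall j, q (pj j) = pj j).
  { intro j; unfold q. rewrite (blk_unique pj H0 Hs (pj j) j); auto. }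
  assert (Hr : forall p mu, quot (Mseq m) p / Rpower (INR p + 1) mu =
     g (INR (q p)) * exp (beta * ln (INR p + 1) - mu * ln (INR p + 1))).
  { intros p mu. rewrite Hquot. unfold m, Rpower. rewrite (Rplus_comm 1 (INR p)).
    unfold Rminus. rewrite exp_plus, exp_Ropp. unfold Rdiv. ring. }
  exists (Mseq m). split; [|split; [|split]].
  - split; [|split; [|split]].
    + exact HMpos.
    + reflexivity.
    + intros p Hp. destruct p as [|k]; [lia|].
      replace (S k - 1)%nat with k by lia. simpl.
      specialize (HMpos k). specialize (Hmmono k). specialize (Hmpos k).
      assert (0 < Mseq m k * Mseq m k * m k) by (apply Rmult_lt_0_compat; nra).
      nra.
    + intro A. destruct (Hginf A) as [T [HT HTA]].
      destruct (INR_unbounded T) as [j Hj].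
      exists (pj j). intros p Hp. rewrite Hquot.
      assert (Hqq : (pj j <= q p)%nat) by (apply (pj_mono pj Hs); auto; apply blk_ge; auto).
      assert (A < g (INR (q p))).
      { apply HTA. pose proof (le_INR _ _ Hqq). pose proof (le_INR _ _ (pj_ge pj Hs j)). lra. }
      specialize (HG1 p). specialize (HR1 p). unfold m. nra.
  - intro p. rewrite Hquot. unfold m.
    assert (g (INR (q p)) <= g (INR p)).
    { apply g_mono; auto. apply pos_INR. apply le_INR; auto. }
    assert (0 < Rpower (1 + INR p) beta) by (specialize (HR1 p); lra). nra.
  - intro j. rewrite Hquot. unfold m. rewrite HqP. reflexivity.
  - split; [exact Hb| split].
    + intros mu [Hmu [a [Ha Hai]]].
      destruct (Rle_or_lt mu beta) as [Hle|Hlt]; auto. exfalso.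
      set (d := mu - beta).
      set (K := exp (ln a / d)).
      assert (HK : 0 < K) by apply exp_pos.
      destruct (Hsup (2 * K)) as [j [Hj1 HjC]].
      set (P := pj j) in *.
      destruct (pj (S j)) as [|k] eqn:EQ.
      { specialize (Hs j). lia. }
      assert (HP1 : (1 <= P)%nat) by (pose proof (pj_ge pj Hs j); unfold P; lia).
      assert (HPk : (P <= k)%nat) by (specialize (Hs j); rewrite EQ in Hs; unfold P; lia).
      assert (HqK : q k = P).
      { unfold q. rewrite (blk_unique pj H0 Hs k j); auto. rewrite EQ; lia. }
      specialize (Hai P k HPk). rewrite !Hr in Hai. rewrite HqK in Hai.
      unfold P in Hai at 1. rewrite HqP in Hai. fold P in Hai.
      assert (HINP : 1 <= INR P) by (apply (le_INR 1); auto).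
      rewrite S_INR in HjC.
      set (X := INR P) in *. set (Y := INR k + 1) in *.
      assert (HY : K * (X + 1) < Y).
      { apply (Rmult_lt_compat_r X) in HjC; [|lra].
        replace (Y / X * X) with Y in HjC by (field; lra). nra. }
      assert (HlnY : ln a / d + ln (X + 1) < ln Y).
      { replace (ln a / d) with (ln K) by (unfold K; apply ln_exp).
        rewrite <- ln_mult by lra. apply ln_increasing; nra. }
      assert (Hd : 0 < d) by (unfold d; lra).
      assert (Hineq : ln a + (beta * ln Y - mu * ln Y) < beta * ln (X + 1) - mu * ln (X + 1)).
      { assert (ln a = d * (ln a / d)) by (field; lra).
        assert (d * (ln a / d + ln (X + 1)) < d * ln Y) by (apply Rmult_lt_compat_l; auto).
        unfold d in *. nra. }
      apply exp_increasing in Hineq. rewrite exp_plus, exp_ln in Hineq by lra.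
      assert (HGP : 1 <= g X) by (apply Hg1; lra).
      assert (0 < exp (beta * ln Y - mu * ln Y)) by apply exp_pos.
      nra.
    + intros c Hc Hup. destruct (Rle_lt_or_eq_dec _ _ Hb) as [Hbp|Hbe]; [|lra].
      apply Hup. split; auto. exists 1. split; [lra|].
      intros p p' Hpp. rewrite !Hr.
      replace (beta * ln (INR p + 1) - beta * ln (INR p + 1)) with 0 by ring.
      replace (beta * ln (INR p' + 1) - beta * ln (INR p' + 1)) with 0 by ring.
      rewrite exp_0, !Rmult_1_r, Rmult_1_l.
      apply g_mono; auto. apply pos_INR. apply le_INR; auto.
Qed.
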